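(* Let $(\Omega,+)$ be a group and $x,a,y,b,z$ subgroups of $\Omega$. Then: (1) $\Gamma(x,a,x,b,z)=\big((x\wedge a)+z\big)\wedge(x+b)=(x\wedge a)+\big(z\wedge(x+b)\big)$; (2) $\Gamma(x,a,y,b,a)=\Big(\big(x\wedge(a+y)\big)+b\Big)\wedge a=\Big(x+\big((y+a)\wedge b\big)\Big)\wedge a$; (3) $\Gamma(x,a,y,b,b)=\Big(\big(a+(y\wedge b)\big)\wedge x\Big)+b=\Big(a\wedge\big(x+(y\wedge b)\big)\Big)+b$. In particular, for all subgroups $x,a,y,b$: $\Gamma(x,a,x,b,x)=x$, $\Gamma(a,a,y,b,b)=a+b$ and $\Gamma(b,a,y,b,a)=a\wedge b$.
   Context: $(\Omega,+)$ is a group written additively but not necessarily abelian. For subsets $u,v$: $u\wedge v:=u\cap v$ and $u+v:=\{\mu+\nu:\mu\in u,\nu\in v\}$. $\Gamma(x,a,y,b,z)=\{\omega\in\Omega:\exists\alpha\in a,\beta\in b:\ \alpha+\omega+\beta\in y,\ \alpha+\omega\in z,\ \omega+\beta\in x\}$. *)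

(* Defs.v *)
(* A (not necessarily abelian, possibly infinite) group written
   additively, given as a record of carrier, operations and group axioms. *)
Set Implicit Arguments.

Record Group := {
  carrier :> Type;
  gadd : carrier -> carrier -> carrier;
  gzero : carrier;
  gopp : carrier -> carrier;
  gaddA : forall x y z, gadd x (gadd y z) = gadd (gadd x y) z;
  gadd0l : forall x, gadd gzero x = x;
  gadd0r : forall x, gadd x gzero = x;
  gaddNl : forall x, gadd (gopp x) x = gzero;
  gaddNr : forall x, gadd x (gopp x) = gzero
}.

Definition gset (G : Group) := G -> Prop.

Definition is_subgroup (G : Group) (H : gset G) : Prop :=
  H (gzero G) /\
  (forall u v, H u -> H v -> H (gadd G u v)) /\
  (forall u, H u -> H (gopp G u)).

Definition smeet (G : Group) (u v : gset G) : gset G := fun w => u w /\ v w.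

Definition ssum (G : Group) (u v : gset G) : gset G :=
  fun w => exists mu nu, u mu /\ v nu /\ w = gadd G mu nu.

Definition seq_set (G : Group) (u v : gset G) : Prop := forall w, u w <-> v w.

Definition Gamma (G : Group) (x a y b z : gset G) : gset G :=
  fun w => exists alpha beta, a alpha /\ b beta /\
    y (gadd G (gadd G alpha w) beta) /\ z (gadd G alpha w) /\ x (gadd G w beta).

(* Main.v *)
Require Import Defs.

Section Alg.
Variable G : Group.
Lemma gopp_add (u v : G) : gopp G (gadd G u v) = gadd G (gopp G v) (gopp G u).
Proof.
  assert (H : gadd G (gadd G u v) (gadd G (gopp G v) (gopp G u)) = gzero G).
  { rewrite gaddA, <- (gaddA G u v (gopp G v)), gaddNr, gadd0r, gaddNr. reflexivity. }
  transitivity (gadd G (gopp G (gadd G u v)) (gadd G (gadd G u v) (gadd G (gopp G v) (gopp G u)))).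
  - rewrite H, gadd0r. reflexivity.
  - rewrite gaddA, gaddNl, gadd0l. reflexivity.
Qed.
Lemma gopp_opp (u : G) : gopp G (gopp G u) = u.
Proof.
  transitivity (gadd G (gopp G (gopp G u)) (gadd G (gopp G u) u)).
  - rewrite gaddNl, gadd0r. reflexivity.
  - rewrite gaddA, gaddNl, gadd0l. reflexivity.
Qed.
Lemma gopp0 : gopp G (gzero G) = gzero G.
Proof. rewrite <- (gadd0l G (gopp G (gzero G))). apply gaddNr. Qed.
Lemma gaddKN (u v : G) : gadd G (gadd G u v) (gopp G v) = u.
Proof. rewrite <- gaddA, gaddNr, gadd0r. reflexivity. Qed.
Lemma gaddNK (u v : G) : gadd G (gadd G u (gopp G v)) v = u.
Proof. rewrite <- gaddA, gaddNl, gadd0r. reflexivity. Qed.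
End Alg.

Ltac gsimp := repeat (first [rewrite gaddA | rewrite gopp_add | rewrite gopp_opp | rewrite gopp0
  | rewrite gadd0l | rewrite gadd0r | rewrite gaddNl | rewrite gaddNr | rewrite gaddKN | rewrite gaddNK]);
  reflexivity.


Ltac dsub H := let H0 := fresh "H0" in let HD := fresh "HD" in let HN := fresh "HN" in
  destruct H as (H0 & HD & HN).

Ltac mem_rw e := match goal with |- ?P ?t => replace t with e; [| try gsimp] end.

Section Parts.
Variable G : Group.
Variables x a y b z : gset G.
Hypotheses (sx : is_subgroup x) (sa : is_subgroup a) (sy : is_subgroup y) (sb : is_subgroup b) (sz : is_subgroup z).
Notation "u + v" := (gadd G u v).
Notation "- u" := (gopp G u).

Lemma P1a : seq_set (Gamma x a x b z) (smeet (ssum (smeet x a) z) (ssum x b)).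
Proof.
  pose proof sx as [x0 [xD xN]]; pose proof sa as [a0 [aD aN]]; pose proof sb as [b0 [bD bN]];
  pose proof sz as [z0 [zD zN]].
  intro w; split.
  - intros (al & be & Ha & Hb & Hy & Hz & Hx).
    assert (Hal : x al).
    { mem_rw (((al + w) + be) + - (w + be)). auto. }
    split.
    + exists (- al), (al + w). repeat split; auto. gsimp.
    + exists (w + be), (- be). repeat split; auto. gsimp.
  - intros [(p & q & [Hpx Hpa] & Hq & Hw1) (r & s & Hr & Hs & Hw2)].
    exists (- p), (- s). repeat split; auto.
    + mem_rw (- p + r). auto. rewrite Hw2. gsimp.
    + mem_rw q. auto. rewrite Hw1. gsimp.
    + mem_rw r. auto. rewrite Hw2. gsimp.
Qed.

Lemma P1b : seq_set (smeet (ssum (smeet x a) z) (ssum x b)) (ssum (smeet x a) (smeet z (ssum x b))).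
Proof.
  pose proof sx as [x0 [xD xN]]; pose proof sa as [a0 [aD aN]]; pose proof sb as [b0 [bD bN]];
  pose proof sz as [z0 [zD zN]].
  intro w; split.
  - intros [(p & q & [Hpx Hpa] & Hq & Hw1) (r & s & Hr & Hs & Hw2)].
    exists p, q. repeat split; auto.
    exists (- p + r), s. repeat split; auto.
    transitivity (- p + w). rewrite Hw1; gsimp. rewrite Hw2; gsimp.
  - intros (p & q & [Hpx Hpa] & [Hq (r & s & Hr & Hs & Hq2)] & Hw).
    split.
    + exists p, q. repeat split; auto.
    + exists (p + r), s. repeat split; auto. rewrite Hw, Hq2. gsimp.
Qed.

Lemma P2a : seq_set (Gamma x a y b a) (smeet (ssum (smeet x (ssum a y)) b) a).
Proof.
  pose proof sx as [x0 [xD xN]]; pose proof sa as [a0 [aD aN]]; pose proof sb as [b0 [bD bN]];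
  pose proof sy as [y0 [yD yN]].
  intro w; split.
  - intros (al & be & Ha & Hb & Hy & Hz & Hx).
    split.
    + exists (w + be), (- be). repeat split; auto.
      exists (- al), ((al + w) + be). repeat split; auto. all: try gsimp. 
    + mem_rw (- al + (al + w)). auto.
  - intros [(p & s & [Hpx (a1 & y1 & Ha1 & Hy1 & Hp)] & Hs & Hw) Hwa].
    exists (- a1), (- s). repeat split; auto.
    + mem_rw y1. auto. rewrite Hw, Hp. gsimp.
    + mem_rw p. auto. rewrite Hw. gsimp.
Qed.

Lemma P2b : seq_set (smeet (ssum (smeet x (ssum a y)) b) a) (smeet (ssum x (smeet (ssum y a) b)) a).
Proof.
  pose proof sx as [x0 [xD xN]]; pose proof sa as [a0 [aD aN]]; pose proof sb as [b0 [bD bN]];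
  pose proof sy as [y0 [yD yN]].
  intro w; split.
  - intros [(p & s & [Hpx (a1 & y1 & Ha1 & Hy1 & Hp)] & Hs & Hw) Hwa].
    split; auto.
    exists p, s. repeat split; auto.
    exists (- y1), (- a1 + w). repeat split; auto.
    rewrite Hw, Hp. gsimp.
  - intros [(p & s & Hpx & [(y1 & a1 & Hy1 & Ha1 & Hs1) Hs] & Hw) Hwa].
    split; auto.
    exists p, s. repeat split; auto.
    exists (w + - a1), (- y1). repeat split; auto.
    rewrite Hw, Hs1. gsimp.
Qed.

Lemma P3a : seq_set (Gamma x a y b b) (ssum (smeet (ssum a (smeet y b)) x) b).
Proof.
  pose proof sx as [x0 [xD xN]]; pose proof sa as [a0 [aD aN]]; pose proof sb as [b0 [bD bN]];
  pose proof sy as [y0 [yD yN]].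
  intro w; split.
  - intros (al & be & Ha & Hb & Hy & Hz & Hx).
    exists (w + be), (- be). repeat split; auto.
    + exists (- al), ((al + w) + be). repeat split; auto. gsimp.
    + gsimp.
  - intros (p & s & [(a1 & t & Ha1 & [Hty Htb] & Hp) Hpx] & Hs & Hw).
    exists (- a1), (- s). repeat split; auto.
    + mem_rw t. auto. rewrite Hw, Hp. gsimp.
    + mem_rw (t + s). auto. rewrite Hw, Hp. gsimp.
    + mem_rw p. auto. rewrite Hw. gsimp.
Qed.

Lemma P3b : seq_set (ssum (smeet (ssum a (smeet y b)) x) b) (ssum (smeet a (ssum x (smeet y b))) b).
Proof.
  pose proof sx as [x0 [xD xN]]; pose proof sa as [a0 [aD aN]]; pose proof sb as [b0 [bD bN]];
  pose proof sy as [y0 [yD yN]].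
  intro w; split.
  - intros (p & s & [(a1 & t & Ha1 & [Hty Htb] & Hp) Hpx] & Hs & Hw).
    exists a1, (t + s). repeat split; auto.
    + exists p, (- t). repeat split; auto. rewrite Hp. gsimp.
    + rewrite Hw, Hp. gsimp.
  - intros (a1 & s & [Ha1 (p & t & Hpx & [Hty Htb] & Hp)] & Hs & Hw).
    exists p, (t + s). repeat split; auto.
    + exists a1, (- t). repeat split; auto. rewrite Hp. gsimp.
    + rewrite Hw, Hp. gsimp.
Qed.

Lemma Q1 : seq_set (Gamma x a x b x) x.
Proof.
  pose proof sx as [x0 [xD xN]]; pose proof sb as [b0 [bD bN]]; pose proof sa as [a0 [aD aN]].
  intro w; split.
  - intros (al & be & Ha & Hb & Hy & Hz & Hx).
    assert (Hal : x al).
    { mem_rw (((al + w) + be) + - (w + be)). auto. }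
    mem_rw (- al + (al + w)). auto.
  - intro Hw. exists (gzero G), (gzero G). repeat split; auto; mem_rw w; auto.
Qed.

Lemma Q2 : seq_set (Gamma a a y b b) (ssum a b).
Proof.
  pose proof sy as [y0 [yD yN]]; pose proof sb as [b0 [bD bN]]; pose proof sa as [a0 [aD aN]].
  intro w; split.
  - intros (al & be & Ha & Hb & Hy & Hz & Hx).
    exists (w + be), (- be). repeat split; auto. gsimp.
  - intros (p & s & Hp & Hs & Hw).
    exists (- p), (- s). repeat split; auto.
    + mem_rw (gzero G). auto. rewrite Hw. gsimp.
    + mem_rw s. auto. rewrite Hw. gsimp.
    + mem_rw p. auto. rewrite Hw. gsimp.
Qed.

Lemma Q3 : seq_set (Gamma b a y b a) (smeet a b).
Proof.
  pose proof sy as [y0 [yD yN]]; pose proof sb as [b0 [bD bN]]; pose proof sa as [a0 [aD aN]].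
  intro w; split.
  - intros (al & be & Ha & Hb & Hy & Hz & Hx). split.
    + mem_rw (- al + (al + w)). auto.
    + mem_rw ((w + be) + - be). auto.
  - intros [Hwa Hwb].
    exists (- w), (gzero G). repeat split; auto;
    first [mem_rw (gzero G); auto | mem_rw w; auto].
Qed.
End Parts.

Theorem theorem10p1 (G : Group) (x a y b z : gset G) :
  is_subgroup x -> is_subgroup a -> is_subgroup y -> is_subgroup b -> is_subgroup z ->
  (* (1) *)
  (seq_set (Gamma x a x b z) (smeet (ssum (smeet x a) z) (ssum x b)) /\
   seq_set (smeet (ssum (smeet x a) z) (ssum x b)) (ssum (smeet x a) (smeet z (ssum x b)))) /\
  (* (2) *)
  (seq_set (Gamma x a y b a) (smeet (ssum (smeet x (ssum a y)) b) a) /\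
   seq_set (smeet (ssum (smeet x (ssum a y)) b) a) (smeet (ssum x (smeet (ssum y a) b)) a)) /\
  (* (3) *)
  (seq_set (Gamma x a y b b) (ssum (smeet (ssum a (smeet y b)) x) b) /\
   seq_set (ssum (smeet (ssum a (smeet y b)) x) b) (ssum (smeet a (ssum x (smeet y b))) b)) /\
  (* particular cases *)
  seq_set (Gamma x a x b x) x /\
  seq_set (Gamma a a y b b) (ssum a b) /\
  seq_set (Gamma b a y b a) (smeet a b).
Proof.
  intros sx sa sy sb sz.
  split; [split|split; [split|split; [split|split; [|split]]]].
  - apply P1a; auto.
  - apply P1b; auto.
  - apply P2a; auto.
  - apply P2b; auto.
  - apply P3a; auto.
  - apply P3b; auto.
  - apply Q1; auto.
  - apply Q2; auto.
  - apply Q3; auto.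
Qed.
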